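(* Let $N=\{1,\dots,n\}$, $n\ge2$, be a parallel-link network with unit demand and affine latencies $\ell_i(x_i)=a_ix_i+b_i$, $a_i>0$, $b_i\ge0$, and suppose $x_i(0)>0$ for all $i\in N$. Let $c\in\mathbb{R}_+$. For $t\in\mathbb{R}^N_+$ and a flow $x$, we have that $t\in\mathcal{T}(c)$ and $x=x(t)$ if and only if there exists $K\in\mathbb{R}$ such that (1) $a_ix_i+b_i+t_i=K$ for all $i\in N$; (2) $\sum_{i\in N}x_i=1$; (3) $t_i=\min\left\{\left(a_i+\frac{1}{\sum_{j\neq i}1/a_j}\right)x_i,\;c\right\}$ for all $i\in N$; (4) $x_i>0$ for all $i\in N$.
   Context: Parallel links $N$ from source to destination, one unit of flow; a flow is $x\in\mathbb{R}^N_+$ with $\sum_ix_i=1$. For tolls $t\in\mathbb{R}^N_+$, $x(t)$ denotes the unique Wardrop equilibrium for $t$: for all $i,j$ with $x_i>0$, $\ell_i(x_i)+t_i\le \ell_j(x_j)+t_j$; $x(0)$ is the untolled one. Profit $\Pi_i(t)=t_ix_i(t)$. $\mathcal{T}(c)$ is the set of $c$-capped subgame perfect Nash equilibria: toll vectors $t$ with $0\le t_i\le c$ for all $i$ such that for every $i$ and every $t'_i\in[0,c]$, $\Pi_i(t_i,t_{-i})\ge\Pi_i(t'_i,t_{-i})$ (flow recomputed as the Wardrop equilibrium). *)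

(* Defs.v *)
From Stdlib Require Import Reals Lra Arith.
Open Scope R_scope.

(* Links are indexed 0..n-1; vectors are functions nat -> R (values at
   indices >= n are irrelevant). *)

Definition sumN (n : nat) (f : nat -> R) : R := sum_f_R0 f (pred n).

Definition is_flow (n : nat) (x : nat -> R) : Prop :=
  (forall i, (i < n)%nat -> 0 <= x i) /\ sumN n x = 1.

Definition lat (a b : nat -> R) (i : nat) (y : R) : R := a i * y + b i.

Definition wardrop (n : nat) (a b t x : nat -> R) : Prop :=
  is_flow n x /\
  forall i j, (i < n)%nat -> (j < n)%nat -> 0 < x i ->
    lat a b i (x i) + t i <= lat a b j (x j) + t j.

Definition upd (t : nat -> R) (i : nat) (s : R) : nat -> R :=
  fun k => if Nat.eq_dec k i then s else t k.

(* t is a c-capped subgame perfect Nash equilibrium (t in T(c)).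
   Profits are computed at the (unique) Wardrop equilibria. *)
Definition capped_SPNE (n : nat) (a b : nat -> R) (c : R) (t : nat -> R) : Prop :=
  (forall i, (i < n)%nat -> 0 <= t i <= c) /\
  forall i, (i < n)%nat -> forall s, 0 <= s <= c ->
    forall x x', wardrop n a b t x -> wardrop n a b (upd t i s) x' ->
      s * x' i <= t i * x i.

(* Main.v *)
Require Import Defs.
From Stdlib Require Import Reals Lra Arith Lia Classical.
Open Scope R_scope.

Definition mask (f : nat -> R) (i : nat) : nat -> R :=
  fun j => if Nat.eq_dec j i then 0 else f j.

Lemma sumN_ext n f g : (1 <= n)%nat -> (forall j, (j < n)%nat -> f j = g j) ->
  sumN n f = sumN n g.
Proof. intros Hn H; unfold sumN; apply sum_eq; intros; apply H; lia. Qed.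

Lemma sumN_le n f g : (1 <= n)%nat -> (forall j, (j < n)%nat -> f j <= g j) ->
  sumN n f <= sumN n g.
Proof. intros Hn H; unfold sumN; apply sum_Rle; intros; apply H; lia. Qed.

Lemma sumN_plus n f g : sumN n (fun j => f j + g j) = sumN n f + sumN n g.
Proof. unfold sumN; apply plus_sum. Qed.

Lemma sumN_scal n f k : sumN n (fun j => k * f j) = k * sumN n f.
Proof. unfold sumN; rewrite scal_sum; apply sum_eq; intros; ring. Qed.

Lemma sum_zero N : sum_f_R0 (fun _ => 0) N = 0.
Proof. induction N; simpl; [lra| rewrite IHN; lra]. Qed.

Lemma sum_split_aux f N i : (i <= N)%nat ->
  sum_f_R0 f N = f i + sum_f_R0 (mask f i) N.
Proof.
  induction N; intros H.
  - assert (i = 0%nat) by lia; subst; simpl; unfold mask; simpl; lra.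
  - destruct (Nat.eq_dec i (S N)).
    + subst. simpl. unfold mask at 2.
      destruct (Nat.eq_dec (S N) (S N)); [|congruence].
      rewrite (sum_eq (mask f (S N)) f); [lra|].
      intros j Hj; unfold mask; destruct (Nat.eq_dec j (S N)); [lia|auto].
    + simpl. rewrite IHN by lia.
      assert (mask f i (S N) = f (S N)) as E.
      { unfold mask; destruct (Nat.eq_dec (S N) i); [lia|auto]. }
      rewrite E. lra.
Qed.

Lemma sumN_split n f i : (i < n)%nat -> sumN n f = f i + sumN n (mask f i).
Proof. intros; unfold sumN; apply sum_split_aux; lia. Qed.

Lemma sumN_ge0 n f : (1 <= n)%nat -> (forall j, (j < n)%nat -> 0 <= f j) -> 0 <= sumN n f.
Proof.
  intros Hn H. replace 0 with (sumN n (fun _ => 0)).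
  - apply sumN_le; auto.
  - unfold sumN; apply sum_zero.
Qed.

Lemma sumN_ge_term n f i : (i < n)%nat -> (forall j, (j < n)%nat -> 0 <= f j) ->
  f i <= sumN n f.
Proof.
  intros Hi H. rewrite (sumN_split n f i Hi).
  assert (0 <= sumN n (mask f i)); [|lra].
  apply sumN_ge0; [lia|]. intros j Hj; unfold mask; destruct (Nat.eq_dec j i); auto; lra.
Qed.

Lemma sumN_ind n i v : (i < n)%nat ->
  sumN n (fun j => if Nat.eq_dec j i then v else 0) = v.
Proof.
  intros Hi. rewrite (sumN_split _ _ i Hi).
  destruct (Nat.eq_dec i i); [|congruence].
  rewrite (sumN_ext n _ (fun _ => 0)); [unfold sumN; rewrite sum_zero; lra|lia|].
  intros j Hj; unfold mask; destruct (Nat.eq_dec j i); auto.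
Qed.

Lemma flow_pos n x : (1 <= n)%nat -> is_flow n x -> exists j, (j < n)%nat /\ 0 < x j.
Proof.
  intros Hn [H0 H1]. apply NNPP; intro Hc.
  assert (sumN n x <= sumN n (fun _ => 0)).
  { apply sumN_le; auto. intros j Hj. destruct (Rle_or_lt (x j) 0); auto.
    exfalso; apply Hc; eauto. }
  unfold sumN in *; rewrite sum_zero in H; lra.
Qed.

Lemma flow_compare n x y : (1 <= n)%nat -> is_flow n x -> is_flow n y ->
  exists j, (j < n)%nat /\ 0 < y j /\ x j <= y j.
Proof.
  intros Hn Hx Hy. apply NNPP; intro Hc.
  destruct (flow_pos n y Hn Hy) as [j0 [Hj0 Hp]].
  assert (Hle : forall j, (j < n)%nat -> y j <= x j).
  { intros j Hj. destruct Hx as [Hx0 _]; destruct Hy as [Hy0 _].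
    destruct (Rle_or_lt (y j) 0). { specialize (Hx0 j Hj); lra. }
    destruct (Rle_or_lt (x j) (y j)); [|lra]. exfalso; apply Hc; eauto. }
  assert (Hlt : y j0 < x j0).
  { destruct (Rle_or_lt (x j0) (y j0)); [|lra]. exfalso; apply Hc; eauto. }
  destruct Hx as [_ Hx]; destruct Hy as [_ Hy].
  rewrite (sumN_split n y j0 Hj0) in Hy. rewrite (sumN_split n x j0 Hj0) in Hx.
  assert (sumN n (mask y j0) <= sumN n (mask x j0)); [|lra].
  apply sumN_le; auto. intros j Hj; unfold mask; destruct (Nat.eq_dec j j0); auto; lra.
Qed.

Lemma min_pos n x : (forall j, (j < n)%nat -> 0 < x j) ->
  exists mu, 0 < mu /\ forall j, (j < n)%nat -> mu <= x j.
Proof.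
  induction n; intros H.
  - exists 1; split; [lra| intros; lia].
  - destruct IHn as [mu [Hm Hj]]. { intros; apply H; lia. }
    exists (Rmin mu (x n)). split.
    + apply Rmin_glb_lt; auto.
    + intros j Hjn. destruct (Nat.eq_dec j n).
      * subst; apply Rmin_r.
      * eapply Rle_trans; [apply Rmin_l| apply Hj; lia].
Qed.

Definition gpos (y : R) : R := (y + Rabs y) / 2.

Lemma gpos_ge0 y : 0 <= gpos y.
Proof. unfold gpos; unfold Rabs; destruct (Rcase_abs y); lra. Qed.
Lemma gpos_ge y : y <= gpos y.
Proof. unfold gpos; unfold Rabs; destruct (Rcase_abs y); lra. Qed.
Lemma gpos_pos y : 0 < gpos y -> gpos y = y.
Proof. unfold gpos; unfold Rabs; destruct (Rcase_abs y); lra. Qed.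
Lemma gpos_neg y : y <= 0 -> gpos y = 0.
Proof. unfold gpos; unfold Rabs; destruct (Rcase_abs y); lra. Qed.

Lemma cont_g (c a : R) : continuity (fun K => gpos ((K - c) * / a)).
Proof.
  assert (Hh : continuity (fun K => (K - c) * / a)).
  { apply derivable_continuous. reg. }
  assert (H2 : continuity (fun K => Rabs ((K - c) * / a))).
  { exact (continuity_comp _ Rabs Hh Rcontinuity_abs). }
  unfold gpos. unfold Rdiv.
  apply (continuity_mult (fun K => (K - c) * / a + Rabs ((K - c) * / a)) (fun _ => / 2)).
  - exact (continuity_plus _ _ Hh H2).
  - apply continuity_const; intros u v; reflexivity.
Qed.

Lemma cont_sum (c a : nat -> R) N :
  continuity (fun K => sum_f_R0 (fun j => gpos ((K - c j) * / a j)) N).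
Proof.
  induction N; simpl.
  - apply cont_g.
  - exact (continuity_plus _ _ IHN (cont_g (c (S N)) (a (S N)))).
Qed.

Lemma exists_eq (n : nat) (a c : nat -> R) : (1 <= n)%nat ->
  (forall i, (i < n)%nat -> 0 < a i) ->
  (forall i, (i < n)%nat -> 0 <= c i) ->
  exists x, is_flow n x /\ forall i j, (i < n)%nat -> (j < n)%nat -> 0 < x i ->
    a i * x i + c i <= a j * x j + c j.
Proof.
  intros Hn Ha Hc.
  set (f := fun K => sumN n (fun j => gpos ((K - c j) * / a j)) - 1).
  assert (Hf : continuity f).
  { unfold f, sumN. apply (continuity_minus _ (fun _ => 1)).
    - apply cont_sum.
    - apply continuity_const; intros u v; reflexivity. }
  assert (H0 : f 0 < 0).
  { unfold f. rewrite (sumN_ext n _ (fun _ => 0)); auto.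
    - unfold sumN; rewrite sum_zero; lra.
    - intros j Hj. apply gpos_neg. specialize (Hc j Hj); specialize (Ha j Hj).
      assert (0 < / a j) by (apply Rinv_0_lt_compat; auto). nra. }
  assert (Ha0 : 0 < a 0%nat) by (apply Ha; lia).
  assert (Hc0 : 0 <= c 0%nat) by (apply Hc; lia).
  set (Y := c 0%nat + a 0%nat + 1).
  assert (H1 : 0 < f Y).
  { unfold f.
    assert (gpos ((Y - c 0%nat) * / a 0%nat) <= sumN n (fun j => gpos ((Y - c j) * / a j))).
    { apply (sumN_ge_term n (fun j => gpos ((Y - c j) * / a j)) 0%nat); [lia|].
      intros; apply gpos_ge0. }
    assert (1 < (Y - c 0%nat) * / a 0%nat).
    { unfold Y. replace (c 0%nat + a 0%nat + 1 - c 0%nat) with (a 0%nat + 1) by ring.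
      rewrite Rmult_plus_distr_r, Rinv_r by lra.
      assert (0 < / a 0%nat) by (apply Rinv_0_lt_compat; auto). lra. }
    pose proof (gpos_ge ((Y - c 0%nat) * / a 0%nat)). lra. }
  destruct (IVT f 0 Y Hf ltac:(unfold Y; lra) H0 H1) as [K [_ HK]].
  exists (fun j => gpos ((K - c j) * / a j)). split; [split|].
  - intros; apply gpos_ge0.
  - unfold f in HK; lra.
  - intros i j Hi Hj Hp.
    assert (Ei := gpos_pos _ Hp).
    pose proof (gpos_ge ((K - c j) * / a j)) as Gj.
    rewrite Ei. pose proof (Ha i Hi) as Hai. pose proof (Ha j Hj) as Haj.
    assert (a i * ((K - c i) * / a i) = K - c i) by (field; lra).
    assert (a j * ((K - c j) * / a j) = K - c j) by (field; lra).
    assert (a j * ((K - c j) * / a j) <= a j * gpos ((K - c j) * / a j)) by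
      (apply Rmult_le_compat_l; lra).
    lra.
Qed.

Definition Sm (n : nat) (a : nat -> R) (i : nat) : R :=
  sumN n (fun j => if Nat.eq_dec j i then 0 else / a j).

Lemma Sm_pos n a i : (2 <= n)%nat -> (forall j, (j < n)%nat -> 0 < a j) -> (i < n)%nat ->
  0 < Sm n a i.
Proof.
  intros Hn Ha Hi. set (k := if Nat.eq_dec i 0 then 1%nat else 0%nat).
  assert (Hk : (k < n)%nat /\ k <> i) by (unfold k; destruct (Nat.eq_dec i 0); lia).
  destruct Hk as [Hk Hki].
  assert (0 < / a k) by (apply Rinv_0_lt_compat; auto).
  unfold Sm.
  assert (T := sumN_ge_term n (fun j => if Nat.eq_dec j i then 0 else / a j) k Hk).
  simpl in T. destruct (Nat.eq_dec k i); [congruence|].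
  eapply Rlt_le_trans; [eassumption|apply T].
  intros j Hj; destruct (Nat.eq_dec j i); [lra|].
  left; apply Rinv_0_lt_compat; auto.
Qed.

Lemma S_split n a i : (i < n)%nat ->
  sumN n (fun j => / a j) = / a i + Sm n a i.
Proof. intros Hi. rewrite (sumN_split _ _ i Hi). reflexivity. Qed.

Lemma le_div u v q : 0 < q -> u * q <= v -> u <= v / q.
Proof.
  intros Hq H. unfold Rdiv. apply Rmult_le_reg_r with q; auto.
  rewrite Rmult_assoc, Rinv_l by lra. lra.
Qed.

Lemma div_le v q w : 0 < q -> v <= w * q -> v / q <= w.
Proof.
  intros Hq H. unfold Rdiv. apply Rmult_le_reg_r with q; auto.
  rewrite Rmult_assoc, Rinv_l by lra. lra.
Qed.

Lemma wardrop_ex n a b t : (1 <= n)%nat -> (forall i, (i < n)%nat -> 0 < a i) ->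
  (forall i, (i < n)%nat -> 0 <= b i) -> (forall i, (i < n)%nat -> 0 <= t i) ->
  exists x, wardrop n a b t x.
Proof.
  intros Hn Ha Hb Ht.
  destruct (exists_eq n a (fun j => b j + t j) Hn Ha) as [x [Hf Hw]].
  { intros i Hi; specialize (Hb i Hi); specialize (Ht i Hi); lra. }
  exists x; split; auto. intros i j Hi Hj Hp; unfold lat.
  specialize (Hw i j Hi Hj Hp); lra.
Qed.

Lemma key n a b t x K i s x' : (2 <= n)%nat -> (forall j, (j < n)%nat -> 0 < a j) ->
  (i < n)%nat -> sumN n x = 1 ->
  (forall j, (j < n)%nat -> a j * x j + b j + t j = K) ->
  wardrop n a b (upd t i s) x' -> 0 < x' i ->
  x' i <= x i - (s - t i) / (a i + / Sm n a i).
Proof.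
  intros Hn Ha Hi Hx HK [[_ Hx'] Hw] Hp.
  set (K' := a i * x' i + b i + s).
  set (S' := Sm n a i).
  assert (HS : 0 < S') by (apply Sm_pos; auto).
  assert (Hai := Ha i Hi).
  assert (Hle : sumN n (mask (fun j => x j + (K' - K) * / a j) i) <= sumN n (mask x' i)).
  { apply sumN_le; [lia|]. intros j Hj. unfold mask.
    destruct (Nat.eq_dec j i); [lra|].
    specialize (Hw i j Hi Hj Hp). unfold lat, upd in Hw.
    destruct (Nat.eq_dec i i); [|congruence]. destruct (Nat.eq_dec j i); [congruence|].
    specialize (HK j Hj). pose proof (Ha j Hj).
    assert (x j + (K' - K) * / a j = (a j * x j + K' - K) / a j) by (field; lra).
    rewrite H0. apply div_le; auto. unfold K'. lra. }
  rewrite (sumN_ext n _ (fun j => mask x i j + (K' - K) * (if Nat.eq_dec j i then 0 else / a j))) in Hle by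
    (lia || (intros j Hj; unfold mask; destruct (Nat.eq_dec j i); ring)).
  rewrite sumN_plus, sumN_scal in Hle. fold (Sm n a i) in Hle. fold S' in Hle.
  rewrite (sumN_split n x i Hi) in Hx. rewrite (sumN_split n x' i Hi) in Hx'.
  assert (HKi := HK i Hi).
  assert (Hu : (x' i - x i) * (1 + a i * S') <= - ((s - t i) * S')).
  { unfold K' in Hle. nra. }
  assert (E : (s - t i) / (a i + / S') = (s - t i) * S' / (1 + a i * S')).
  { field. split; nra. }
  rewrite E. assert (x' i - x i <= - ((s - t i) * S') / (1 + a i * S')).
  { apply le_div; nra. }
  unfold Rdiv in *. lra.
Qed.

Lemma deviation n a b t x K mu i d : (2 <= n)%nat -> (forall j, (j < n)%nat -> 0 < a j) ->
  (i < n)%nat -> sumN n x = 1 ->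
  (forall j, (j < n)%nat -> a j * x j + b j + t j = K) ->
  0 < mu -> (forall j, (j < n)%nat -> mu <= x j) ->
  - (mu * a i) <= d <= mu * a i ->
  exists x', wardrop n a b (upd t i (t i + d)) x' /\
    x' i = x i - d / (a i + / Sm n a i).
Proof.
  intros Hn Ha Hi Hx HK Hmu Hmin Hd.
  set (S' := Sm n a i).
  assert (HS' : 0 < S') by (apply Sm_pos; auto).
  assert (Hai := Ha i Hi).
  set (S := / a i + S').
  assert (HS : sumN n (fun j => / a j) = S) by (apply S_split; auto).
  assert (HSp : 0 < S) by (assert (0 < / a i) by (apply Rinv_0_lt_compat; auto); unfold S; lra).
  set (dl := d / (a i * S)).
  set (x' := fun j => x j + dl * / a j - (if Nat.eq_dec j i then d / a i else 0)).
  assert (Exi : x' i = x i - d / (a i + / S')).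
  { unfold x'. destruct (Nat.eq_dec i i); [|congruence]. unfold dl, S.
    field. repeat split; try lra. nra. }
  set (w := d / a i).
  assert (Hw : - mu <= w <= mu).
  { unfold w. split.
    - apply le_div; auto. lra.
    - apply div_le; auto. lra. }
  exists x'. split; [|exact Exi].
  assert (Hcost : forall j, (j < n)%nat -> a j * x' j + b j + upd t i (t i + d) j = K + dl).
  { intros j Hj. pose proof (Ha j Hj). specialize (HK j Hj). unfold x', upd.
    destruct (Nat.eq_dec j i).
    - subst j. assert (a i * (x i + dl * / a i - d / a i) = a i * x i + dl - d) by (field; lra).
      lra.
    - assert (a j * (x j + dl * / a j - 0) = a j * x j + dl) by (field; lra). lra. }
  split; [split|].
  - intros j Hj. destruct (Nat.eq_dec j i).
    + subst j. rewrite Exi.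
      assert (Hq : 0 < a i / (a i + / S') <= 1).
      { assert (0 < / S') by (apply Rinv_0_lt_compat; auto). split.
        - unfold Rdiv; apply Rmult_lt_0_compat; auto. apply Rinv_0_lt_compat; lra.
        - apply div_le; lra. }
      replace (d / (a i + / S')) with (w * (a i / (a i + / S'))).
      2:{ unfold w. assert (0 < / S') by (apply Rinv_0_lt_compat; auto). field. repeat split; nra. }
      specialize (Hmin i Hi). nra.
    + unfold x'. destruct (Nat.eq_dec j i); [congruence|].
      pose proof (Ha j Hj) as Haj.
      assert (Hinv : 0 < / a j) by (apply Rinv_0_lt_compat; auto).
      assert (Hle : / a j <= S).
      { rewrite <- HS. apply (sumN_ge_term n (fun j => / a j) j Hj).
        intros k Hk; left; apply Rinv_0_lt_compat; auto. }
      set (r := / a j / S).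
      assert (Hr : 0 < r <= 1).
      { unfold r; split. - unfold Rdiv; apply Rmult_lt_0_compat; auto. apply Rinv_0_lt_compat; lra.
        - apply div_le; lra. }
      replace (dl * / a j) with (w * r) by (unfold dl, w, r; field; lra).
      specialize (Hmin j Hj). nra.
  - unfold x'.
    rewrite (sumN_ext n _ (fun j => (x j + dl * / a j) + (-1) * (if Nat.eq_dec j i then d / a i else 0)))
      by (lia || (intros; ring)).
    rewrite sumN_plus, sumN_scal, sumN_plus, sumN_scal, HS, Hx, sumN_ind by auto.
    unfold dl. field. lra.
  - intros i0 j Hi0 Hj _. unfold lat.
    pose proof (Hcost i0 Hi0). pose proof (Hcost j Hj). lra.
Qed.

Lemma upd_eq t i s : upd t i s i = s.
Proof. unfold upd; destruct (Nat.eq_dec i i); congruence. Qed.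
Lemma upd_neq t i s j : j <> i -> upd t i s j = t j.
Proof. intros; unfold upd; destruct (Nat.eq_dec j i); congruence. Qed.

Lemma forward_pos (n : nat) (a b : nat -> R) (c : R) t x :
  (2 <= n)%nat ->
  (forall i, (i < n)%nat -> 0 < a i) ->
  (forall i, (i < n)%nat -> 0 <= b i) ->
  (forall x0, wardrop n a b (fun _ => 0) x0 -> forall i, (i < n)%nat -> 0 < x0 i) ->
  capped_SPNE n a b c t -> wardrop n a b t x ->
  forall i, (i < n)%nat -> 0 < x i.
Proof.
  intros Hn Ha Hb Hx0 [Hrange Hspne] Hw i Hi.
  destruct (Rle_or_lt (x i) 0) as [Hle|]; [exfalso|auto].
  assert (Hxi : x i = 0) by (destruct Hw as [[Hnn _] _]; specialize (Hnn i Hi); lra).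
  destruct (Rle_or_lt c 0) as [Hc|Hc].
  - assert (Ht0 : forall j, (j < n)%nat -> t j = 0).
    { intros j Hj; specialize (Hrange j Hj); lra. }
    assert (Hw0 : wardrop n a b (fun _ => 0) x).
    { destruct Hw as [Hf Hw']. split; auto. intros i0 j Hi0 Hj Hp.
      specialize (Hw' i0 j Hi0 Hj Hp). rewrite (Ht0 i0 Hi0), (Ht0 j Hj) in Hw'. lra. }
    specialize (Hx0 x Hw0 i Hi). lra.
  - destruct (wardrop_ex n a b (fun _ => 0)) as [x0 Hw0]; auto; [lia| intros; lra|].
    pose proof (Hx0 x0 Hw0) as Hp0.
    destruct (flow_compare n x0 x) as [j [Hj [Hxj Hcmp]]]; [lia| apply Hw0| apply Hw|].
    set (L := a j * x j + b j + t j).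
    assert (HbL : b i < L).
    { destruct Hw0 as [_ Hw0]. specialize (Hw0 i j Hi Hj (Hp0 i Hi)). unfold lat in Hw0.
      pose proof (Ha i Hi); pose proof (Ha j Hj); pose proof (Hp0 i Hi).
      assert (0 < a i * x0 i) by nra.
      assert (a j * x0 j <= a j * x j) by (apply Rmult_le_compat_l; lra).
      pose proof (Hrange j Hj). unfold L. lra. }
    set (s := Rmin c ((L - b i) / 2)).
    assert (Hs : 0 < s /\ s <= c /\ s < L - b i).
    { unfold s. split; [apply Rmin_glb_lt; lra|]. split; [apply Rmin_l|].
      pose proof (Rmin_r c ((L - b i) / 2)). lra. }
    assert (Hupd : forall j0, (j0 < n)%nat -> 0 <= upd t i s j0).
    { intros j0 Hj0; unfold upd; destruct (Nat.eq_dec j0 i); [lra|]. apply Hrange; auto. }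
    destruct (wardrop_ex n a b (upd t i s)) as [x' Hw']; auto; [lia|].
    assert (Hpr := Hspne i Hi s ltac:(lra) x x' Hw Hw').
    rewrite Hxi in Hpr.
    assert (Hx'i : x' i = 0).
    { destruct Hw' as [[Hnn _] _]. specialize (Hnn i Hi).
      destruct (Rle_or_lt (x' i) 0); [lra|]. assert (0 < s * x' i) by nra. lra. }
    destruct (flow_compare n x x') as [j' [Hj' [Hxj' Hcmp']]]; [lia| apply Hw| apply Hw'|].
    assert (Hji : j' <> i) by (intro; subst; lra).
    destruct Hw' as [_ Hw']. specialize (Hw' j' i Hj' Hi Hxj'). unfold lat in Hw'.
    rewrite upd_eq, upd_neq, Hx'i in Hw' by auto.
    destruct Hw as [_ Hw]. specialize (Hw j j' Hj Hj' Hxj). unfold lat in Hw.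
    pose proof (Ha j' Hj').
    assert (a j' * x j' <= a j' * x' j') by (apply Rmult_le_compat_l; lra).
    unfold L in *. lra.
Qed.

Lemma small3 p q r : 0 < p -> 0 < q -> 0 < r ->
  exists d, 0 < d /\ d <= p /\ d <= q /\ d <= r.
Proof.
  intros. exists (Rmin (Rmin p q) r). repeat split.
  - repeat apply Rmin_glb_lt; auto.
  - eapply Rle_trans; apply Rmin_l.
  - eapply Rle_trans; [apply Rmin_l| apply Rmin_r].
  - apply Rmin_r.
Qed.

Lemma foc (n : nat) (a b : nat -> R) (c : R) t x K i :
  (2 <= n)%nat -> (forall j, (j < n)%nat -> 0 < a j) ->
  capped_SPNE n a b c t -> wardrop n a b t x ->
  (forall j, (j < n)%nat -> 0 < x j) ->
  (forall j, (j < n)%nat -> a j * x j + b j + t j = K) ->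
  (i < n)%nat ->
  t i = Rmin ((a i + / Sm n a i) * x i) c.
Proof.
  intros Hn Ha [Hrange Hspne] Hw Hpos HK Hi.
  destruct (min_pos n x Hpos) as [mu [Hmu Hmin]].
  assert (HS' : 0 < Sm n a i) by (apply Sm_pos; auto).
  assert (Hai := Ha i Hi).
  set (P := a i + / Sm n a i).
  assert (HP : a i < P) by (unfold P; assert (0 < / Sm n a i) by (apply Rinv_0_lt_compat; auto); lra).
  assert (Hsum : sumN n x = 1) by apply Hw.
  assert (Hxi := Hpos i Hi). assert (Hti := Hrange i Hi).
  set (D := x i - t i / P).
  assert (Gen : forall d, - (mu * a i) <= d <= mu * a i -> 0 <= t i + d <= c ->
            P * (d / P) * (D - d / P) <= 0).
  { intros d Hd Hs.
    destruct (deviation n a b t x K mu i d Hn Ha Hi Hsum HK Hmu Hmin Hd) as [x' [Hw' Hx']].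
    pose proof (Hspne i Hi (t i + d) Hs x x' Hw Hw') as Hpr.
    fold P in Hx'. rewrite Hx' in Hpr.
    assert (E : (t i + d) * (x i - d / P) - t i * x i = P * (d / P) * (D - d / P)).
    { unfold D. field. lra. }
    lra. }
  assert (HA : t i < c -> P * x i <= t i).
  { intros Htc. destruct (Rle_or_lt (P * x i) (t i)) as [|Hlt]; auto. exfalso.
    assert (HD : 0 < D).
    { unfold D. assert (t i / P < x i); [|lra]. apply Rmult_lt_reg_r with P; [lra|].
      unfold Rdiv; rewrite Rmult_assoc, Rinv_l by lra. lra. }
    destruct (small3 (c - t i) (mu * a i) (D * P / 2)) as [d [Hd0 [Hd1 [Hd2 Hd3]]]];
      try lra; try nra.
    specialize (Gen d ltac:(nra) ltac:(lra)).
    set (q := d / P) in Gen.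
    assert (Hq : 0 < q /\ q <= D / 2).
    { unfold q; split.
      - unfold Rdiv; apply Rmult_lt_0_compat; auto; apply Rinv_0_lt_compat; lra.
      - apply div_le; lra. }
    assert (0 < P * q) by nra. nra. }
  assert (HB : 0 < t i -> t i <= P * x i).
  { intros Htp. destruct (Rle_or_lt (t i) (P * x i)) as [|Hlt]; auto. exfalso.
    assert (HD : D < 0).
    { unfold D. assert (x i < t i / P); [|lra]. apply Rmult_lt_reg_r with P; [lra|].
      unfold Rdiv; rewrite Rmult_assoc, Rinv_l by lra. lra. }
    destruct (small3 (t i) (mu * a i) (- D * P / 2)) as [e [He0 [He1 [He2 He3]]]];
      try lra; try nra.
    specialize (Gen (- e) ltac:(nra) ltac:(lra)).
    set (q := - e / P) in Gen.
    assert (Hq : q < 0 /\ D / 2 <= q).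
    { unfold q; split.
      - unfold Rdiv. assert (0 < / P) by (apply Rinv_0_lt_compat; lra). nra.
      - apply le_div; lra. }
    assert (P * q < 0) by nra. nra. }
  unfold Rmin. destruct (Rle_dec (P * x i) c) as [Hle|Hgt].
  - assert (0 < P * x i) by nra.
    destruct (Rlt_or_le (t i) c) as [Htc|Htc].
    + specialize (HA Htc). specialize (HB ltac:(lra)). lra.
    + specialize (HB ltac:(lra)). lra.
  - destruct (Rlt_or_le (t i) c) as [Htc|Htc].
    + specialize (HA Htc). lra.
    + lra.
Qed.

Theorem mainTheorem5 (n : nat) (a b : nat -> R) (c : R) :
  (2 <= n)%nat ->
  (forall i, (i < n)%nat -> 0 < a i) ->
  (forall i, (i < n)%nat -> 0 <= b i) ->
  (forall x0, wardrop n a b (fun _ => 0) x0 -> forall i, (i < n)%nat -> 0 < x0 i) ->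
  0 <= c ->
  forall t x : nat -> R,
    (forall i, (i < n)%nat -> 0 <= t i) ->
    is_flow n x ->
    ((capped_SPNE n a b c t /\ wardrop n a b t x) <->
     exists K : R,
       (forall i, (i < n)%nat -> a i * x i + b i + t i = K) /\
       sumN n x = 1 /\
       (forall i, (i < n)%nat ->
          t i = Rmin ((a i + / sumN n (fun j => if Nat.eq_dec j i then 0 else / a j)) * x i) c) /\
       (forall i, (i < n)%nat -> 0 < x i)).
Proof.
  intros Hn Ha Hb Hx0 Hc t x Ht Hflow. split.
  - intros [Hsp Hw].
    pose proof (forward_pos n a b c t x Hn Ha Hb Hx0 Hsp Hw) as Hpos.
    set (K := a 0%nat * x 0%nat + b 0%nat + t 0%nat).
    assert (HK : forall j, (j < n)%nat -> a j * x j + b j + t j = K).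
    { intros j Hj. destruct Hw as [_ Hw]. unfold K.
      assert (H0 : (0 < n)%nat) by lia.
      pose proof (Hw j 0%nat Hj H0 (Hpos j Hj)). pose proof (Hw 0%nat j H0 Hj (Hpos 0%nat H0)).
      unfold lat in *. lra. }
    exists K. split; [exact HK|]. split; [apply Hflow|]. split; [|exact Hpos].
    intros i Hi. exact (foc n a b c t x K i Hn Ha Hsp Hw Hpos HK Hi).
  - intros [K [HK [Hs [Hfoc Hpos]]]].
    assert (Hw : wardrop n a b t x).
    { split; auto. intros i j Hi Hj _. unfold lat.
      pose proof (HK i Hi); pose proof (HK j Hj). lra. }
    split; [|exact Hw]. split.
    + intros i Hi. split; auto. rewrite (Hfoc i Hi). apply Rmin_r.
    + intros i Hi s Hsc x0 x' Hw0 Hw'.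
      assert (Hai := Ha i Hi). assert (Hti := Ht i Hi).
      assert (Hxi := Hpos i Hi).
      assert (Hx0i : x i <= x0 i).
      { destruct (flow_compare n x x0) as [j [Hj [Hp Hcmp]]]; [lia|apply Hflow|apply Hw0|].
        destruct Hw0 as [_ Hw0]. specialize (Hw0 j i Hj Hi Hp). unfold lat in Hw0.
        pose proof (HK j Hj). pose proof (HK i Hi). pose proof (Ha j Hj).
        assert (a j * x j <= a j * x0 j) by (apply Rmult_le_compat_l; lra).
        assert (a i * x i <= a i * x0 i) by lra.
        apply Rmult_le_reg_l with (a i); lra. }
      assert (t i * x i <= t i * x0 i) by (apply Rmult_le_compat_l; lra).
      destruct (Rle_or_lt (x' i) 0) as [Hle|Hgt].
      * assert (x' i = 0) by (destruct Hw' as [[Hnn _] _]; specialize (Hnn i Hi); lra).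
        rewrite H0. assert (0 <= t i * x i) by nra. lra.
      * pose proof (key n a b t x K i s x' Hn Ha Hi Hs HK Hw' Hgt) as Hk.
        assert (HS' : 0 < Sm n a i) by (apply Sm_pos; auto).
        set (P := a i + / Sm n a i) in Hk.
        assert (HP : a i < P) by (unfold P; assert (0 < / Sm n a i) by (apply Rinv_0_lt_compat; auto); lra).
        assert (s * x' i <= s * (x i - (s - t i) / P)) by (apply Rmult_le_compat_l; lra).
        assert (E : s * (x i - (s - t i) / P) - t i * x i = (s - t i) * (P * x i - s) * / P)
          by (field; lra).
        assert (HinvP : 0 < / P) by (apply Rinv_0_lt_compat; lra).
        assert (Hneg : (s - t i) * (P * x i - s) <= 0).
        { specialize (Hfoc i Hi). change (sumN n (fun j => if Nat.eq_dec j i then 0 else / a j))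
            with (Sm n a i) in Hfoc. fold P in Hfoc.
          unfold Rmin in Hfoc. destruct (Rle_dec (P * x i) c).
          - replace (P * x i) with (t i) by lra. assert (0 <= (s - t i) * (s - t i)) by apply Rle_0_sqr. lra.
          - rewrite Hfoc. nra. }
        assert ((s - t i) * (P * x i - s) * / P <= 0) by nra.
        lra.
Qed.
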